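(* Let $k$ be a $\Delta=\{\partial_0,\ldots,\partial_m\}$-field and let $L$ be a parameterized liouvillian extension of $k$. Then $L=\bigcup_{i\in\mathbb N}L_i$ for a chain of fields $k=L_0\subset L_1\subset\cdots$ with $L_{i+1}=L_i(\{t_{i,j}\}_{j\in\mathbb N})$, where $\{t_{i,j}\}$ is a set of elements such that for each $j$ either $\partial_0t_{i,j}\in L_i$, or $t_{i,j}\ne0$ and $\partial_0t_{i,j}/t_{i,j}\in L_i$, or $t_{i,j}$ is algebraic over $L_i$.
   Context: All fields have characteristic zero. $C_L^0$ denotes the $\partial_0$-constants of $L$, and $L\langle t\rangle_\Delta$ the field generated over $L$ by $t$ and all its derivatives with respect to $\Delta$. A $\Delta$-field $L\supset k$ is a parameterized liouvillian extension of $k$ if $C_L^0=C_k^0$ and there is a tower of $\Delta$-fields $k=M_0\subset M_1\subset\cdots\subset M_r=L$ with $M_i=M_{i-1}\langle s_i\rangle_\Delta$ where for each $i$ either $\partial_0s_i\in M_{i-1}$, or $s_i\ne0$ and $\partial_0s_i/s_i\in M_{i-1}$, or $s_i$ is algebraic over $M_{i-1}$. *)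

(* Defs.v *)
From mathcomp Require Import all_boot all_algebra.
Set Implicit Arguments. Unset Strict Implicit. Unset Printing Implicit Defensive.
Import GRing.Theory.
Local Open Scope ring_scope.

Definition is_derivation (L : fieldType) (D : L -> L) : Prop :=
  (forall x y, D (x + y) = D x + D y) /\
  (forall x y, D (x * y) = D x * y + x * D y).

Definition is_Delta_field (L : fieldType) (m : nat) (d : 'I_m.+1 -> L -> L) : Prop :=
  (forall i, is_derivation (d i)) /\ (forall i j x, d i (d j x) = d j (d i x)).

Definition is_subfield (L : fieldType) (M : L -> Prop) : Prop :=
  [/\ M 0, M 1, (forall x y, M x -> M y -> M (x - y)),
      (forall x y, M x -> M y -> M (x * y)) & (forall x, M x -> M x^-1)].

Definition is_Delta_subfield (L : fieldType) (m : nat) (d : 'I_m.+1 -> L -> L)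
  (M : L -> Prop) : Prop :=
  is_subfield M /\ (forall i x, M x -> M (d i x)).

Definition field_gen (L : fieldType) (M S : L -> Prop) : L -> Prop :=
  fun x => forall F : L -> Prop, is_subfield F ->
    (forall y, M y -> F y) -> (forall y, S y -> F y) -> F x.

Definition derivatives (L : fieldType) (m : nat) (d : 'I_m.+1 -> L -> L) (s : L)
  : L -> Prop := fun y => exists w : seq 'I_m.+1, y = foldr d s w.

Definition Delta_gen (L : fieldType) (m : nat) (d : 'I_m.+1 -> L -> L)
  (M : L -> Prop) (s : L) : L -> Prop :=
  field_gen M (derivatives d s).

Definition algebraic_over (L : fieldType) (M : L -> Prop) (t : L) : Prop :=
  exists p : {poly L}, [/\ p != 0, (forall i, M p`_i) & root p t].

Definition liouvillian_elt (L : fieldType) (m : nat) (d : 'I_m.+1 -> L -> L)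
  (M : L -> Prop) (t : L) : Prop :=
  M (d ord0 t) \/ (t != 0 /\ M (d ord0 t / t)) \/ algebraic_over M t.

Definition param_liouvillian (L : fieldType) (m : nat) (d : 'I_m.+1 -> L -> L)
  (k : L -> Prop) : Prop :=
  (* C_L^0 = C_k^0 *)
  (forall x, d ord0 x = 0 -> k x) /\
  exists (r : nat) (M : nat -> L -> Prop) (s : nat -> L),
    [/\ (forall x, M 0%N x <-> k x),
        (forall x, M r x) &
        (forall i, (0 < i <= r)%N ->
           (forall x, M i x <-> Delta_gen d (M i.-1) (s i) x) /\
           liouvillian_elt d (M i.-1) (s i))].

(* Main.v *)
Require Import Defs.
From mathcomp Require Import all_boot all_algebra.
From mathcomp Require Import ring.
From Stdlib Require Import FunctionalExtensionality PropExtensionality ClassicalEpsilon.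
Set Implicit Arguments. Unset Strict Implicit. Unset Printing Implicit Defensive.
Import GRing.Theory.
Local Open Scope ring_scope.

Section Gen.
Variable L : fieldType.

Lemma fg_subfield (M S : L -> Prop) : is_subfield (field_gen M S).
Proof.
split.
- by move=> F [] *.
- by move=> F [] *.
- move=> x y Hx Hy F HF HM HS; case: (HF) => _ _ Hsb _ _; apply: Hsb; [exact: Hx|exact: Hy].
- move=> x y Hx Hy F HF HM HS; case: (HF) => _ _ _ HM' _; apply: HM'; [exact: Hx|exact: Hy].
- move=> x Hx F HF HM HS; case: (HF) => _ _ _ _ HV; apply: HV; exact: Hx.
Qed.

Lemma fg_M (M S : L -> Prop) y : M y -> field_gen M S y.
Proof. by move=> My F _ HM _; apply: HM. Qed.

Lemma fg_S (M S : L -> Prop) y : S y -> field_gen M S y.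
Proof. by move=> Sy F _ _ HS; apply: HS. Qed.

Lemma fg_min (M S F : L -> Prop) : is_subfield F -> (forall y, M y -> F y) ->
  (forall y, S y -> F y) -> forall x, field_gen M S x -> F x.
Proof. by move=> HF HM HS x Hx; apply: Hx. Qed.

Lemma sf_add (F : L -> Prop) : is_subfield F -> forall x y, F x -> F y -> F (x + y).
Proof.
case=> H0 _ Hsb _ _ x y Hx Hy.
have -> : x + y = x - (0 - y) by rewrite sub0r opprK.
by apply: (Hsb) => //; apply: (Hsb).
Qed.

Lemma sf_opp (F : L -> Prop) : is_subfield F -> forall x, F x -> F (- x).
Proof. case=> H0 _ Hsb _ _ x Hx; rewrite -sub0r; exact: Hsb. Qed.

Lemma sf_mul (F : L -> Prop) : is_subfield F -> forall x y, F x -> F y -> F (x * y).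
Proof. by case. Qed.

Lemma sf_inv (F : L -> Prop) : is_subfield F -> forall x, F x -> F x^-1.
Proof. by case. Qed.

Lemma sf_horner (F : L -> Prop) : is_subfield F -> forall (p : {poly L}) x,
  (forall i, F p`_i) -> F x -> F p.[x].
Proof.
move=> HF; elim/poly_ind => [|p c IH] x Hc Hx; first by rewrite horner0; case: HF.
rewrite hornerMXaddC; apply: sf_add => //; last first.
  by have := Hc 0%N; rewrite coefD coefMX coefC /= add0r.
apply: sf_mul => //; apply: IH => // i.
by have := Hc i.+1; rewrite coefD coefMX coefC /= addr0.
Qed.

Variable D : L -> L.
Hypothesis HD : is_derivation D.

Lemma der0 : D 0 = 0.
Proof. case: HD => Ha _; have := Ha 0 0; rewrite addr0 => /(congr1 (fun z => z - D 0)).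
move=> H; rewrite subrr addrK in H; by rewrite -H. Qed.

Lemma derD x y : D (x + y) = D x + D y. Proof. by case: HD. Qed.
Lemma derM x y : D (x * y) = D x * y + x * D y. Proof. by case: HD. Qed.
Lemma derN x : D (- x) = - D x.
Proof. apply/eqP; rewrite -subr_eq0 opprK -derD addNr der0 //. Qed.
Lemma derB x y : D (x - y) = D x - D y. Proof. by rewrite derD derN. Qed.
Lemma der1 : D 1 = 0.
Proof. have := derM 1 1; rewrite !mulr1 !mul1r => /(congr1 (fun z => z - D 1)).
move=> H; rewrite subrr addrK in H; by rewrite -H. Qed.
Lemma derV x : x != 0 -> D x^-1 = - D x * x^-1 * x^-1.
Proof.
move=> nx; have := derM x x^-1; rewrite divff // der1 => /esym/eqP.
rewrite addr_eq0 => /eqP H.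
have H' : x * D x^-1 = - (D x / x) by rewrite H opprK.
apply: (mulfI nx); rewrite H'; field => //.
Qed.

Lemma der_fg (M S H : L -> Prop) : is_subfield H ->
  (forall y, M y -> H y /\ H (D y)) -> (forall y, S y -> H y /\ H (D y)) ->
  forall x, field_gen M S x -> H x /\ H (D x).
Proof.
move=> HH HM HS; apply: fg_min => //.
have H0 : H 0 by case: HH.
have H1 : H 1 by case: HH.
split.
- by rewrite der0.
- by rewrite der1.
- move=> x y [Hx Hdx] [Hy Hdy]; rewrite derB; split; case: HH => _ _ Hsb _ _; exact: Hsb.
- move=> x y [Hx Hdx] [Hy Hdy]; rewrite derM; split; first exact: sf_mul.
  by apply: sf_add => //; apply: sf_mul.
- move=> x [Hx Hdx]; split; first exact: sf_inv.
  have [->|nx] := eqVneq x 0; first by rewrite invr0 der0.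
  rewrite derV //; apply: sf_mul => //; last exact: sf_inv.
  by apply: sf_mul => //; [apply: sf_opp| apply: sf_inv].
Qed.

Lemma der_horner (H : L -> Prop) : is_subfield H -> forall (p : {poly L}) x,
  (forall i, H p`_i) -> (forall i, H (D p`_i)) -> H x ->
  H (D p.[x] - p^`().[x] * D x).
Proof.
move=> HF; elim/poly_ind => [|p c IH] x Hc Hdc Hx.
  by rewrite deriv0 !horner0 der0 mul0r subrr; case: HF.
have Hp : forall i, H p`_i.
  by move=> i; have := Hc i.+1; rewrite coefD coefMX coefC /= addr0.
have Hdp : forall i, H (D p`_i).
  by move=> i; have := Hdc i.+1; rewrite coefD coefMX coefC /= addr0.
have Hc0 : H (D c) by have := Hdc 0%N; rewrite coefD coefMX coefC /= add0r.
rewrite hornerMXaddC derivMXaddC hornerD hornerMX derD derM.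
have -> : D p.[x] * x + p.[x] * D x + D c - (p.[x] + p^`().[x] * x) * D x
   = (D p.[x] - p^`().[x] * D x) * x + D c by ring.
by apply: sf_add => //; apply: sf_mul => //; apply: IH.
Qed.

End Gen.

Section Main.
Variables (L : fieldType) (m : nat) (d : 'I_m.+1 -> L -> L).
Hypothesis hder : forall i, is_derivation (d i).
Hypothesis hcomm : forall i j x, d i (d j x) = d j (d i x).

Lemma foldr_in (N : L -> Prop) u w : is_Delta_subfield d N -> N u -> N (foldr d u w).
Proof. move=> [_ HN] Hu; elim: w => [|j w IH] //=; exact: HN. Qed.

Lemma foldr_comm i u w : d i (foldr d u w) = foldr d (d i u) w.
Proof. elim: w => [|j w IH] //=; by rewrite hcomm IH. Qed.

Lemma fg_ext (N S S' : L -> Prop) :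
  (forall y, S y -> field_gen N S' y) -> (forall y, S' y -> field_gen N S y) ->
  forall x, field_gen N S x <-> field_gen N S' x.
Proof.
move=> H1 H2 x; split; apply: fg_min; (try exact: fg_subfield); (try exact: fg_M) => //.
Qed.

Lemma deriv_closed (N : L -> Prop) u : is_Delta_subfield d N ->
  is_Delta_subfield d (field_gen N (derivatives d u)).
Proof.
move=> [HsN HdN]; split; first exact: fg_subfield.
move=> j x Hx.
apply: (proj2 (@der_fg L (d j) (hder j) N (derivatives d u)
  (field_gen N (derivatives d u)) (fg_subfield _ _) _ _ x Hx)).
- by move=> y Hy; split; apply: fg_M => //; apply: HdN.
- move=> y [w ->]; split; apply: fg_S; first by exists w.
  by exists (j :: w).
Qed.

Lemma sf_natmul (F : L -> Prop) : is_subfield F -> forall x n, F x -> F (x *+ n).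
Proof.
move=> HF x n Hx; elim: n => [|n IH]; first by rewrite mulr0n; case: HF.
by rewrite mulrS; apply: sf_add.
Qed.

Hypothesis hchar : [pchar L] =i pred0.

Lemma alg_der (N : L -> Prop) u l : is_Delta_subfield d N -> algebraic_over N u ->
  field_gen N (fun y => exists j : nat, y = u) (d l u).
Proof.
move=> [HsN HdN] [p0 [p0n p0c p0r]].
set H := field_gen _ _.
have HsH : is_subfield H by exact: fg_subfield.
have Hu : H u by apply: fg_S; exists 0%N.
suff : forall n (p : {poly L}), (size p <= n)%N -> p != 0 -> (forall i, N p`_i) ->
   root p u -> H (d l u) by move=> Hall; exact: (Hall _ p0 (leqnn _) p0n p0c p0r).
elim=> [|n IH] p Hs pn pc pr.
  by move: pn; rewrite -size_poly_eq0; case: (size p) Hs.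
have pdc : forall i, N p^`()`_i by move=> i; rewrite coef_deriv; apply: sf_natmul.
have [pd0|pdn] := eqVneq p^`() 0.
  exfalso.
  case: (leqP (size p) 1) => hs.
    move: pr; rewrite (size1_polyC hs) rootE hornerC => /eqP p00.
    by move: pn; rewrite (size1_polyC hs) p00 eqxx.
  have := congr1 (fun q : {poly L} => q`_(size p).-2) pd0.
  rewrite coef_deriv coef0.
  have -> : (size p).-2.+1 = (size p).-1 by case: (size p) hs => [|[|k]].
  rewrite -lead_coefE -mulr_natr => /eqP; rewrite mulf_eq0 lead_coef_eq0 (negPf pn) /=.
  move/pcharf0P: hchar => ->; by case: (size p) hs => [|[|k]].
have [pdr|pdr] := eqVneq p^`().[u] 0.
  apply: (IH p^`()) => //; last by rewrite rootE pdr.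
  by rewrite -ltnS; apply: leq_trans Hs; apply: lt_size_deriv.
have Hder := @der_horner L (d l) (hder l) H HsH p u
  (fun i => @fg_M L N _ _ (pc i)) (fun i => @fg_M L N _ _ (HdN l _ (pc i))) Hu.
move: Hder; rewrite (rootP pr) der0 ?sub0r; last exact: hder.
move=> /(sf_opp HsH); rewrite opprK => Hpd.
have Hph : H p^`().[u] by apply: (sf_horner HsH) => // i; apply: fg_M; exact: pdc.
have -> : d l u = (p^`().[u])^-1 * (p^`().[u] * d l u) by rewrite mulrA mulVf ?mul1r.
by apply: (sf_mul HsH) => //; apply: (sf_inv HsH).
Qed.


Lemma exp_comp u l : u != 0 -> d ord0 (d l u / u) = d l (d ord0 u / u).
Proof.
move=> un.
rewrite (derM (hder ord0)) (derM (hder l)) (derV (hder ord0)) // (derV (hder l)) //.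
rewrite hcomm; ring.
Qed.

Lemma level_step (N : L -> Prop) u : is_Delta_subfield d N -> liouvillian_elt d N u ->
  exists T : nat -> L,
   (forall x, field_gen N (derivatives d u) x <-> field_gen N (fun y => exists j, y = T j) x)
   /\ (forall j, liouvillian_elt d N (T j)).
Proof.
move=> HN; have [HsN HdN] := HN.
case=> [Hp|[[un He]|Ha]].
- exists (fun j => foldr d u (odflt [::] (@unpickle (seq 'I_m.+1) j))); split.
    apply: fg_ext => y.
      by move=> [w ->]; apply: fg_S; exists (pickle w); rewrite pickleK.
    by move=> [j ->]; apply: fg_S; eexists.
  by move=> j; left; rewrite foldr_comm; apply: foldr_in.
- pose T j := match j with 0%N => u | j'.+1 =>
     let p := odflt ([::], ord0) (@unpickle (seq 'I_m.+1 * 'I_m.+1)%type j') in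
     foldr d (d p.2 u / u) p.1 end.
  exists T; split; last first.
    case=> [|j]; first by right; left.
    left; rewrite /T foldr_comm exp_comp //; apply: foldr_in => //; exact: HdN.
  have HsH : is_subfield (field_gen N (fun y => exists j, y = T j)) by exact: fg_subfield.
  have HG : forall l x, field_gen N (fun y => exists j, y = T j) x ->
      field_gen N (fun y => exists j, y = T j) (d l x).
    move=> l x Hx.
    apply: (proj2 (@der_fg L (d l) (hder l) N _ _ HsH _ _ x Hx)).
      by move=> y Hy; split; apply: fg_M => //; apply: HdN.
    move=> y [j ->]; split; first by apply: fg_S; exists j.
    case: j => [|j].
      have -> : d l (T 0%N) = u * T (pickle (([::] : seq 'I_m.+1), l)).+1.
        by rewrite /= pickleK /= mulrC divfK.
      by apply: (sf_mul HsH); [apply: fg_S; exists 0%N | apply: fg_S; eexists].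
    apply: fg_S; exists (pickle
      (l :: (odflt ([::], ord0) (@unpickle (seq 'I_m.+1 * 'I_m.+1)%type j)).1,
       (odflt ([::], ord0) (@unpickle (seq 'I_m.+1 * 'I_m.+1)%type j)).2)).+1.
    by rewrite /= pickleK.
  apply: fg_ext => y.
    move=> [w ->]; elim: w => [|l w IH] /=; first by apply: fg_S; exists 0%N.
    exact: HG.
  have HD := deriv_closed u HN; have [HsD HdD] := HD.
  move=> [[|j] ->]; first by apply: fg_S; exists [::].
  rewrite /=; apply: (foldr_in _ HD).
  apply: (sf_mul HsD); first by apply: fg_S; exists [:: (odflt ([::], ord0) (@unpickle (seq 'I_m.+1 * 'I_m.+1)%type j)).2].
  by apply: (sf_inv HsD); apply: fg_S; exists [::].
- exists (fun _ => u); split; last by move=> j; right; right.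
  have HsH : is_subfield (field_gen N (fun y => exists j : nat, y = u)) by exact: fg_subfield.
  apply: fg_ext => y.
    move=> [w ->]; elim: w => [|l w IH] /=; first by apply: fg_S; exists 0%N.
    apply: (proj2 (@der_fg L (d l) (hder l) N _ _ HsH _ _ _ IH)).
      by move=> z Hz; split; apply: fg_M => //; apply: HdN.
    move=> z [j ->]; split; first by apply: fg_S; exists j.
    exact: alg_der.
  by move=> [j ->]; apply: fg_S; exists [::].
Qed.

End Main.

Theorem lemma9p14 (L : fieldType) (m : nat) (d : 'I_m.+1 -> L -> L)
  (k : L -> Prop)
  (hchar : [pchar L] =i pred0)
  (hL : is_Delta_field d) (hk : is_Delta_subfield d k)
  (hPL : param_liouvillian d k) :
  exists (Li : nat -> L -> Prop) (t : nat -> nat -> L),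
    [/\ (forall x, Li 0%N x <-> k x),
        (forall i x, Li i x -> Li i.+1 x),
        (forall x, exists i, Li i x),
        (forall i x, Li i.+1 x <-> field_gen (Li i) (fun y => exists j, y = t i j) x) &
        (forall i j, liouvillian_elt d (Li i) (t i j))].
Proof.
case: hL => hder hcomm.
case: hPL => _ [r [M [s [HM0 HMr HMi]]]].
have M0 : M 0%N = k.
  by apply: functional_extensionality => x; apply: propositional_extensionality.
have HDM : forall i, (i <= r)%N -> is_Delta_subfield d (M i).
  elim => [|i IH] Hi; first by rewrite M0.
  have [Hfg _] := HMi i.+1 (andb_true_intro (conj (ltn0Sn i) Hi)).
  have -> : M i.+1 = field_gen (M i) (derivatives d (s i.+1)).
    by apply: functional_extensionality => x; apply: propositional_extensionality.
  apply: deriv_closed => //; apply: IH; exact: ltnW.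
have step : forall i, exists T : nat -> L,
   (forall x, M (minn i.+1 r) x <-> field_gen (M (minn i r)) (fun y => exists j, y = T j) x)
   /\ (forall j, liouvillian_elt d (M (minn i r)) (T j)).
  move=> i; case: (ltnP i r) => Hir.
    rewrite (minn_idPl Hir) ?(minn_idPl (ltnW Hir)).
    have [Hfg Hl] := HMi i.+1 (andb_true_intro (conj (ltn0Sn i) Hir)).
    have [T [HT1 HT2]] := level_step hder hcomm hchar (HDM i (ltnW Hir)) Hl.
    by exists T; split => // x; rewrite Hfg; exact: HT1.
  rewrite ?(minn_idPr Hir) ?(minn_idPr (leqW Hir)).
  exists (fun _ => 0); split.
    by move=> x; split => _; [apply: fg_M; apply: HMr | apply: HMr].
  move=> j; left; rewrite der0 //; by case: (HDM r (leqnn r)) => [[]].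
pose T i := proj1_sig (constructive_indefinite_description _ (step i)).
have HT : forall i, _ := fun i => proj2_sig (constructive_indefinite_description _ (step i)).
exists (fun i => M (minn i r)), T; split.
- by move=> x; rewrite min0n M0.
- move=> i x; case: (ltnP i r) => Hir.
    rewrite (minn_idPl Hir) ?(minn_idPl (ltnW Hir)) => Hx.
    have [Hfg _] := HMi i.+1 (andb_true_intro (conj (ltn0Sn i) Hir)).
    by apply/Hfg; apply: fg_M.
  by rewrite ?(minn_idPr Hir) ?(minn_idPr (leqW Hir)).
- by move=> x; exists r; rewrite minnn.
- by move=> i x; case: (HT i) => H1 _; exact: H1.
- by move=> i j; case: (HT i) => _ H2; exact: H2.
Qed.
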